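(* Let $\varepsilon>0$ and $q\in(0,1)$, and fix real numbers $\sigma$ and $\tau$. Then there exist constants $C>0$ and $V_0>0$, depending only on $\varepsilon$, $q$, $\sigma$ and $\tau$, such that for every real $v$ with $|v|\ge V_0$ and every complex $t$ with $\Re(t)=\tau$ satisfying $\inf_{r\in\mathbb{Z}_{\ge 0}}|1-q^{t+r}|>\varepsilon$, writing $s=\sigma+iv$, we have $$|\zeta_q(s,t)|\le \begin{cases} C & (\tau>0),\\ C\,|v| & (\tau=0),\\ C\exp\left(-\tau(1+\pi/2)\,|v|\right) & (\tau<0).\end{cases}$$
   Context: For $q\in(0,1)$ and a positive integer $m$, the $q$-integer is $[m]_q=\frac{1-q^m}{1-q}$, and $q^{w}=e^{w\log q}$ for complex $w$. The $q$-analogue of the Riemann zeta function (Kaneko–Kurokawa–Wakayama) is $\zeta_q(s,t)=\sum_{m=1}^\infty \frac{q^{mt}}{[m]_q^s}$, which converges absolutely for $s\in\mathbb{C}$, $\Re(t)>0$, and extends meromorphically to $\mathbb{C}^2$; its poles are simple and lie at $t\in\{a+2\pi i b/\log q : a,b\in\mathbb{Z},\ a\le 0\}$. For $\Re(t)\le 0$, $\zeta_q(s,t)$ denotes this meromorphic continuation (the hypothesis $\inf_{r\ge0}|1-q^{t+r}|>\varepsilon$ excludes the poles). *)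

(* Defs.v *)
From Stdlib Require Import Reals.
From Coquelicot Require Import Coquelicot.
Open Scope R_scope.

Definition cexp (z : C) : C :=
  (exp (Re z) * cos (Im z), exp (Re z) * sin (Im z)).

Definition qpow (q : R) (w : C) : C := cexp (RtoC (ln q) * w)%C.

Definition qint (q : R) (m : nat) : R := (1 - q ^ m) / (1 - q).

Definition rpow_neg (x : R) (s : C) : C := cexp (- (RtoC (ln x) * s))%C.

Definition CSeries (a : nat -> C) : C :=
  (Series (fun n => Re (a n)), Series (fun n => Im (a n))).

(* Dirichlet series  sum_{m>=1} q^{m t} / [m]_q^s  (absolutely convergent
   for Re t > 0). *)
Definition zeta_q_dirichlet (q : R) (s t : C) : C :=
  CSeries (fun n => (qpow q (RtoC (INR (S n)) * t) * rpow_neg (qint q (S n)) s)%C).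

(* Generalized binomial coefficient binom(s+r-1, r) = s(s+1)...(s+r-1)/r!. *)
Fixpoint gbinom (s : C) (r : nat) : C :=
  match r with
  | O => 1%C
  | S r' => (gbinom s r' * (s + RtoC (INR r')) / RtoC (INR r' + 1))%C
  end.

(* Meromorphic continuation (Kaneko-Kurokawa-Wakayama):
   zeta_q(s,t) = (1-q)^s sum_{r>=0} binom(s+r-1,r) q^{t+r}/(1-q^{t+r}),
   valid for all (s,t) off the poles (q^{t+r} <> 1). *)
Definition zeta_q_cont (q : R) (s t : C) : C :=
  (cexp (s * RtoC (ln (1 - q))) *
   CSeries (fun r => gbinom s r * qpow q (t + RtoC (INR r))
                       / (1 - qpow q (t + RtoC (INR r)))))%C.

Definition zeta_q (q : R) (s t : C) : C :=
  match Rlt_dec 0 (Re t) with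
  | left _ => zeta_q_dirichlet q s t
  | right _ => zeta_q_cont q s t
  end.

(* Main.v *)
Require Import Defs.
From Stdlib Require Import Reals Lra Lia Classical.
From Coquelicot Require Import Coquelicot.
Open Scope R_scope.

Lemma im_le_Cmod (c : C) : Rabs (Im c) <= Cmod c.
Proof.
  unfold Cmod. rewrite <- sqrt_Rsqr_abs. apply sqrt_le_1_alt.
  unfold Rsqr, Im; simpl. destruct c; simpl. nra.
Qed.

Lemma Cmod_le_sum (c : C) : Cmod c <= Rabs (Re c) + Rabs (Im c).
Proof.
  unfold Cmod. destruct c as [x y]; simpl.
  rewrite <- (sqrt_Rsqr (Rabs x + Rabs y)).
  2: { pose proof (Rabs_pos x); pose proof (Rabs_pos y); lra. }
  apply sqrt_le_1_alt. unfold Rsqr.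
  pose proof (Rabs_pos x); pose proof (Rabs_pos y).
  assert (x*x = Rabs x * Rabs x) by (rewrite <- Rabs_mult; rewrite Rabs_pos_eq; nra).
  assert (y*y = Rabs y * Rabs y) by (rewrite <- Rabs_mult; rewrite Rabs_pos_eq; nra).
  nra.
Qed.

Lemma cexp_plus (a b : C) : cexp (a + b) = (cexp a * cexp b)%C.
Proof.
  destruct a as [a1 a2]; destruct b as [b1 b2].
  unfold cexp, Cmult, Cplus; simpl.
  rewrite exp_plus, cos_plus, sin_plus.
  apply injective_projections; simpl; ring.
Qed.

Lemma Cmod_cexp (z : C) : Cmod (cexp z) = exp (Re z).
Proof.
  destruct z as [a b]. unfold cexp, Cmod; simpl.
  replace ((exp a * cos b) * ((exp a * cos b) * 1) + (exp a * sin b) * ((exp a * sin b) * 1))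
    with (exp a ^ 2) by (pose proof (sin2_cos2 b); unfold Rsqr in *; simpl; nra).
  rewrite sqrt_pow2; auto. left; apply exp_pos.
Qed.

Lemma cexp_RtoC (c : R) : cexp (RtoC c) = RtoC (exp c).
Proof.
  unfold cexp, RtoC; simpl. rewrite cos_0, sin_0.
  apply injective_projections; simpl; ring.
Qed.

Lemma qpow_shift (q : R) (t : C) (r : nat) : 0 < q ->
  qpow q (t + RtoC (INR r)) = (qpow q t * RtoC (q ^ r))%C.
Proof.
  intros Hq. unfold qpow.
  replace (RtoC (ln q) * (t + RtoC (INR r)))%C
    with (RtoC (ln q) * t + RtoC (INR r * ln q))%C.
  2: { rewrite RtoC_mult. ring. }
  rewrite cexp_plus, cexp_RtoC. f_equal. f_equal.
  rewrite <- Rpower_pow by auto. unfold Rpower. reflexivity.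
Qed.

Lemma Re_RtoC_mult (c : R) (w : C) : Re (RtoC c * w) = c * Re w.
Proof. destruct w; unfold Cmult, RtoC; simpl; ring. Qed.

Lemma Cmod_qpow (q : R) (w : C) : Cmod (qpow q w) = exp (ln q * Re w).
Proof. unfold qpow. rewrite Cmod_cexp, Re_RtoC_mult. reflexivity. Qed.

Lemma Cpow_RtoC (x : R) (n : nat) : Cpow (RtoC x) n = RtoC (x ^ n).
Proof.
  induction n; simpl. reflexivity. rewrite IHn, RtoC_mult. reflexivity.
Qed.

Lemma Cpow_mult (a b : C) (n : nat) : Cpow (a * b) n = (Cpow a n * Cpow b n)%C.
Proof. induction n; simpl. ring. rewrite IHn. ring. Qed.


Lemma ex_series_Rle (a b : nat -> R) :
  (forall n, Rabs (a n) <= b n) -> ex_series b -> ex_series a.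
Proof. intros H Hb. apply (ex_series_le a b); auto. Qed.

Definition Cex (f : nat -> C) := ex_series (fun n => Cmod (f n)).

Lemma Cex_Re f : Cex f -> ex_series (fun n => Re (f n)).
Proof. intros H. apply (ex_series_Rle _ _ (fun n => re_le_Cmod (f n)) H). Qed.
Lemma Cex_Im f : Cex f -> ex_series (fun n => Im (f n)).
Proof. intros H. apply (ex_series_Rle _ _ (fun n => im_le_Cmod (f n)) H). Qed.

Lemma Cex_le (f : nat -> C) (b : nat -> R) :
  (forall n, Cmod (f n) <= b n) -> ex_series b -> Cex f.
Proof.
  intros H Hb. unfold Cex. apply (ex_series_Rle _ b); auto.
  intros n. rewrite Rabs_pos_eq by apply Cmod_ge_0. auto.
Qed.

Lemma CSeries_ext f g : (forall n, f n = g n) -> CSeries f = CSeries g.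
Proof.
  intros H. unfold CSeries. f_equal; apply Series_ext; intros n; rewrite H; auto.
Qed.

Lemma CSeries_plus f g : Cex f -> Cex g ->
  CSeries (fun n => f n + g n)%C = (CSeries f + CSeries g)%C.
Proof.
  intros Hf Hg. unfold CSeries, Cplus; simpl.
  rewrite <- (Series_plus _ _ (Cex_Re _ Hf) (Cex_Re _ Hg)).
  rewrite <- (Series_plus _ _ (Cex_Im _ Hf) (Cex_Im _ Hg)).
  reflexivity.
Qed.

Lemma CSeries_scal (c : C) g : Cex g ->
  CSeries (fun n => c * g n)%C = (c * CSeries g)%C.
Proof.
  intros Hg. unfold CSeries, Cmult; simpl.
  pose proof (Cex_Re _ Hg) as H1. pose proof (Cex_Im _ Hg) as H2.
  apply injective_projections; simpl.
  - rewrite <- !Series_scal_l.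
    rewrite <- Series_minus.
    + reflexivity.
    + exact (ex_series_scal_l (fst c) _ H1).
    + exact (ex_series_scal_l (snd c) _ H2).
  - rewrite <- !Series_scal_l.
    rewrite <- Series_plus.
    + reflexivity.
    + exact (ex_series_scal_l (fst c) _ H2).
    + exact (ex_series_scal_l (snd c) _ H1).
Qed.

Lemma Cmod_CSeries_le f : Cex f -> Cmod (CSeries f) <= 2 * Series (fun n => Cmod (f n)).
Proof.
  intros Hf. eapply Rle_trans. apply Cmod_le_sum. unfold CSeries; simpl.
  assert (A : Rabs (Series (fun n => Re (f n))) <= Series (fun n => Cmod (f n))).
  { eapply Rle_trans. apply Series_Rabs.
    apply (ex_series_Rle (fun n => Rabs (Re (f n))) (fun n => Cmod (f n))); auto.
    intros n; rewrite Rabs_Rabsolu; apply re_le_Cmod.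
    apply Series_le; auto. intros n; split. apply Rabs_pos. apply re_le_Cmod. }
  assert (B : Rabs (Series (fun n => Im (f n))) <= Series (fun n => Cmod (f n))).
  { eapply Rle_trans. apply Series_Rabs.
    apply (ex_series_Rle (fun n => Rabs (Im (f n))) (fun n => Cmod (f n))); auto.
    intros n; rewrite Rabs_Rabsolu; apply im_le_Cmod.
    apply Series_le; auto. intros n; split. apply Rabs_pos. apply im_le_Cmod. }
  lra.
Qed.

Lemma Series_le_gen (a b : nat -> R) :
  (forall n, Rabs (a n) <= b n) -> ex_series b -> Series a <= Series b.
Proof.
  intros H Hb. eapply Rle_trans. apply Rle_abs. eapply Rle_trans. apply Series_Rabs.
  apply (ex_series_Rle (fun n => Rabs (a n)) b); auto. intros n; rewrite Rabs_Rabsolu; auto.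
  apply Series_le; auto. intros n; split; auto. apply Rabs_pos.
Qed.

Lemma Cmod_CSeries_bound f (b : nat -> R) :
  (forall n, Cmod (f n) <= b n) -> ex_series b -> Cmod (CSeries f) <= 2 * Series b.
Proof.
  intros H Hb. assert (Hf : Cex f) by (apply (Cex_le f b); auto).
  eapply Rle_trans. apply Cmod_CSeries_le; auto.
  apply Rmult_le_compat_l. lra. apply Series_le; auto. intros n; split; auto. apply Cmod_ge_0.
Qed.

Lemma Series_geom_scal (c x : R) : 0 <= x < 1 -> Series (fun n => c * x ^ n) = c / (1 - x).
Proof.
  intros Hx. rewrite Series_scal_l.
  assert (Hg := is_series_unique _ _ (is_series_geom x ltac:(rewrite Rabs_pos_eq; lra))).
  unfold Rdiv. rewrite <- Hg. reflexivity.
Qed.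

Lemma ex_series_geom_scal (c x : R) : 0 <= x < 1 -> ex_series (fun n => c * x ^ n).
Proof.
  intros Hx. apply (ex_series_scal_l c (fun n => x ^ n)). apply ex_series_geom. rewrite Rabs_pos_eq; lra.
Qed.


Fixpoint Bn (a : R) (r : nat) : R :=
  match r with
  | O => 1
  | S r' => Bn a r' * (a + INR r') / (INR r' + 1)
  end.

Lemma Bn_nonneg a r : 0 <= a -> 0 <= Bn a r.
Proof.
  intros Ha. induction r; simpl. lra.
  pose proof (pos_INR r). apply Rmult_le_pos. apply Rmult_le_pos; lra.
  left; apply Rinv_0_lt_compat; lra.
Qed.

Lemma Cmod_gbinom s r : Cmod (gbinom s r) <= Bn (Cmod s) r.
Proof.
  induction r; simpl.
  - rewrite Cmod_1. lra.
  - pose proof (pos_INR r).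
    assert (Hnz : RtoC (INR r + 1) <> 0%C).
    { intros E. apply (f_equal Re) in E. simpl in E. lra. }
    rewrite Cmod_div by auto. rewrite Cmod_mult, Cmod_R, Rabs_pos_eq by lra.
    unfold Rdiv. apply Rmult_le_compat_r. left; apply Rinv_0_lt_compat; lra.
    apply Rmult_le_compat; try apply Cmod_ge_0; auto.
    eapply Rle_trans. apply Cmod_triangle. rewrite Cmod_R, Rabs_pos_eq by lra. lra.
Qed.

Lemma Bn_geom a x r : 0 <= a -> 0 <= x -> x * (a + 1) <= 1/2 -> Bn a r * x ^ r <= (1/2) ^ r.
Proof.
  intros Ha Hx Hax. induction r; simpl. lra.
  pose proof (pos_INR r).
  assert (E : Bn a r * (a + INR r) / (INR r + 1) * (x * x ^ r)
             = (Bn a r * x ^ r) * ((a + INR r) * x / (INR r + 1))) by (field; lra).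
  rewrite E. 
  assert (F : (a + INR r) * x / (INR r + 1) <= 1/2).
  { apply (Rmult_le_reg_r (INR r + 1)). lra. unfold Rdiv. rewrite Rmult_assoc, Rinv_l by lra.
    nra. }
  assert (0 <= Bn a r * x ^ r) by (apply Rmult_le_pos; [apply Bn_nonneg; auto | apply pow_le; auto]).
  assert (0 <= (a + INR r) * x / (INR r + 1)).
  { apply Rmult_le_pos. nra. left; apply Rinv_0_lt_compat; lra. }
  rewrite (Rmult_comm (1/2)). apply Rmult_le_compat; auto.
Qed.

Lemma Bn_ex a x : 0 <= a -> 0 <= x < 1 -> ex_series (fun r => Bn a r * x ^ r).
Proof.
  intros Ha Hx.
  set (rho := (1 + x) / 2).
  destruct (INR_unbounded (a * x / (rho - x))) as [N0 HN0].
  assert (Hrx : 0 < rho - x) by (unfold rho; lra).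
  assert (HN : a * x <= INR N0 * (rho - x)).
  { apply Rgt_lt in HN0. apply (Rmult_lt_compat_r (rho - x)) in HN0; auto.
    unfold Rdiv in HN0. rewrite Rmult_assoc, Rinv_l in HN0 by lra. lra. }
  set (u := fun r => Bn a r * x ^ r).
  assert (Hu : forall k, u (N0 + k)%nat <= u N0 * rho ^ k).
  { induction k.
    - rewrite Nat.add_0_r. simpl. lra.
    - replace (N0 + S k)%nat with (S (N0 + k)) by lia.
      unfold u in *. simpl.
      set (n := (N0 + k)%nat) in *.
      pose proof (pos_INR n).
      assert (Hn : INR N0 <= INR n) by (apply le_INR; unfold n; lia).
      assert (E : Bn a n * (a + INR n) / (INR n + 1) * (x * x ^ n)
             = (Bn a n * x ^ n) * ((a + INR n) * x / (INR n + 1))) by (field; lra).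
      rewrite E.
      assert (F : (a + INR n) * x / (INR n + 1) <= rho).
      { apply (Rmult_le_reg_r (INR n + 1)). lra. unfold Rdiv. rewrite Rmult_assoc, Rinv_l by lra.
        nra. }
      assert (0 <= Bn a n * x ^ n) by (apply Rmult_le_pos; [apply Bn_nonneg; auto | apply pow_le; lra]).
      assert (0 <= (a + INR n) * x / (INR n + 1)).
      { apply Rmult_le_pos. nra. left; apply Rinv_0_lt_compat; lra. }
      replace (Bn a N0 * x ^ N0 * (rho * rho ^ k)) with ((Bn a N0 * x ^ N0 * rho ^ k) * rho) by ring.
      apply Rmult_le_compat; auto. }
  apply (ex_series_incr_n u N0).
  apply (ex_series_Rle _ (fun k => u N0 * rho ^ k)).
  - intros k. rewrite Rabs_pos_eq. apply Hu.
    unfold u. apply Rmult_le_pos; [apply Bn_nonneg; auto | apply pow_le; lra].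
  - apply ex_series_geom_scal. unfold rho; lra.
Qed.


Fixpoint csum (f : nat -> C) (n : nat) : C :=
  match n with
  | O => f O
  | S n' => (csum f n' + f (S n'))%C
  end.

Lemma csum_ext_le f g n : (forall k, (k <= n)%nat -> f k = g k) -> csum f n = csum g n.
Proof.
  induction n; intros H; simpl. apply H; lia.
  rewrite IHn by (intros; apply H; lia). rewrite H by lia. reflexivity.
Qed.

Lemma csum_plus f g n : csum (fun k => f k + g k)%C n = (csum f n + csum g n)%C.
Proof. induction n; simpl. reflexivity. rewrite IHn. ring. Qed.

Lemma csum_scal (c : C) f n : csum (fun k => c * f k)%C n = (c * csum f n)%C.
Proof. induction n; simpl. reflexivity. rewrite IHn. ring. Qed.

Lemma csum_shift f n : csum f (S n) = (f O + csum (fun k => f (S k)) n)%C.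
Proof.
  induction n. simpl. reflexivity.
  change (csum f (S (S n))) with (csum f (S n) + f (S (S n)))%C.
  rewrite IHn. simpl. ring.
Qed.

Lemma Re_csum f n : Re (csum f n) = sum_f_R0 (fun k => Re (f k)) n.
Proof. induction n; simpl. reflexivity. rewrite <- IHn. reflexivity. Qed.

Lemma RtoC_nz (x : R) : x <> 0 -> RtoC x <> 0%C.
Proof. intros H E. apply (f_equal Re) in E. simpl in E. auto. Qed.

Lemma gbinom_S s r : (gbinom s (S r) * RtoC (INR r + 1))%C = (gbinom s r * (s + RtoC (INR r)))%C.
Proof.
  simpl. pose proof (pos_INR r). field. apply RtoC_nz. lra.
Qed.

Lemma vandermonde s s' n :
  csum (fun k => gbinom s k * gbinom s' (n - k))%C n = gbinom (s + s') n.
Proof.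
  induction n.
  - simpl. ring.
  - set (a := gbinom s). set (c := gbinom s').
    assert (Hn : (RtoC (INR n + 1) * csum (fun k => a k * c (S n - k)%nat)%C (S n))%C
                 = ((s + s' + RtoC (INR n)) * csum (fun k => a k * c (n - k)%nat)%C n)%C).
    { rewrite <- csum_scal.
      rewrite (csum_ext_le _ (fun k => RtoC (INR k) * (a k * c (S n - k)%nat)
                                 + RtoC (INR (S n - k)) * (a k * c (S n - k)%nat))%C).
      2: { intros k Hk. rewrite minus_INR by lia. rewrite S_INR.
           replace (RtoC (INR n + 1)) with (RtoC (INR k) + RtoC (INR n + 1 - INR k))%C.
           ring. rewrite <- RtoC_plus. f_equal. ring. }
      rewrite csum_plus.
      rewrite csum_shift. simpl (INR 0).
      change (csum (fun k => (RtoC (INR (S n - k)) * (a k * c (S n - k)%nat))%C) (S n))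
        with (csum (fun k => (RtoC (INR (S n - k)) * (a k * c (S n - k)%nat))%C) n
              + RtoC (INR (S n - S n)) * (a (S n) * c (S n - S n)%nat))%C.
      rewrite Nat.sub_diag. simpl (INR 0).
      rewrite (csum_ext_le (fun k => RtoC (INR (S k)) * (a (S k) * c (S n - S k)%nat))%C
                           (fun k => (s + RtoC (INR k)) * (a k * c (n - k)%nat))%C).
      2: { intros k Hk. simpl (S n - S k)%nat. rewrite S_INR.
           unfold a. transitivity ((gbinom s (S k) * RtoC (INR k + 1)) * c (n - k)%nat)%C.
           ring. rewrite gbinom_S. ring. }
      rewrite (csum_ext_le (fun k => RtoC (INR (S n - k)) * (a k * c (S n - k)%nat))%C
                           (fun k => (s' + RtoC (INR n - INR k)) * (a k * c (n - k)%nat))%C).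
      2: { intros k Hk. replace (S n - k)%nat with (S (n - k)) by lia.
           rewrite S_INR. unfold c. rewrite <- minus_INR by lia.
           transitivity (a k * (gbinom s' (S (n - k)) * RtoC (INR (n - k) + 1)))%C. ring.
           rewrite gbinom_S. ring. }
      rewrite <- csum_scal.
      rewrite (csum_ext_le (fun k => (s + s' + RtoC (INR n)) * (a k * c (n - k)%nat))%C
                 (fun k => (s + RtoC (INR k)) * (a k * c (n - k)%nat)
                        + (s' + RtoC (INR n - INR k)) * (a k * c (n - k)%nat))%C).
      2: { intros k Hk. rewrite RtoC_minus. ring. }
      rewrite csum_plus. ring. }
    unfold a, c in Hn. rewrite IHn in Hn.
    assert (Hnz : RtoC (INR n + 1) <> 0%C) by (apply RtoC_nz; pose proof (pos_INR n); lra).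
    simpl (gbinom (s + s') (S n)).
    apply (f_equal (fun z => z / RtoC (INR n + 1))%C) in Hn.
    unfold a, c.
    transitivity (RtoC (INR n + 1) * csum (fun k => gbinom s k * gbinom s' (S n - k)%nat)%C (S n) / RtoC (INR n + 1))%C.
    field. auto. rewrite Hn. field. auto.
Qed.


Definition Fs (s : C) (x : R) : C := CSeries (fun r => gbinom s r * RtoC (x ^ r))%C.

Lemma conj_RtoC (x : R) : Cconj (RtoC x) = RtoC x.
Proof. unfold Cconj, RtoC; simpl. apply injective_projections; simpl; ring. Qed.

Lemma gbinom_conj s r : gbinom (Cconj s) r = Cconj (gbinom s r).
Proof.
  induction r; simpl.
  - rewrite conj_RtoC. reflexivity.
  - pose proof (pos_INR r).
    rewrite Cdiv_conj by (apply RtoC_nz; lra).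
    rewrite Cmult_conj, Cplus_conj, !conj_RtoC, IHr. reflexivity.
Qed.

Lemma Re_mult_conj z w : Re (z * Cconj w) = Re z * Re w + Im z * Im w.
Proof. destruct z, w; unfold Cmult, Cconj; simpl; ring. Qed.

Lemma Re_mult_R (z : C) (x : R) : Re (z * RtoC x) = Re z * x.
Proof. destruct z; unfold Cmult, RtoC; simpl; ring. Qed.
Lemma Im_mult_R (z : C) (x : R) : Im (z * RtoC x) = Im z * x.
Proof. destruct z; unfold Cmult, RtoC; simpl; ring. Qed.

Lemma F_bound s q x : 0 < q < 1 -> 0 <= x <= q ->
  Cmod (Fs s x) <= sqrt (Series (fun n => Bn (Cmod (s + Cconj s)) n * q ^ n)).
Proof.
  intros Hq Hx.
  set (al := fun n => Re (gbinom s n) * x ^ n).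
  set (be := fun n => Im (gbinom s n) * x ^ n).
  assert (HB : ex_series (fun n => Bn (Cmod s) n * x ^ n))
    by (apply Bn_ex; [apply Cmod_ge_0 | lra]).
  assert (Hal : ex_series (fun n => Rabs (al n))).
  { apply (ex_series_Rle _ _ ) with (2 := HB). intros n. unfold al.
    rewrite Rabs_Rabsolu, Rabs_mult, (Rabs_pos_eq (x ^ n)) by (apply pow_le; lra).
    apply Rmult_le_compat_r. apply pow_le; lra.
    eapply Rle_trans. apply re_le_Cmod. apply Cmod_gbinom. }
  assert (Hbe : ex_series (fun n => Rabs (be n))).
  { apply (ex_series_Rle _ _ ) with (2 := HB). intros n. unfold be.
    rewrite Rabs_Rabsolu, Rabs_mult, (Rabs_pos_eq (x ^ n)) by (apply pow_le; lra).
    apply Rmult_le_compat_r. apply pow_le; lra.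
    eapply Rle_trans. apply im_le_Cmod. apply Cmod_gbinom. }
  assert (Hal' : ex_series al).
  { apply (ex_series_Rle _ _) with (2 := Hal). intros; apply Rle_refl. }
  assert (Hbe' : ex_series be).
  { apply (ex_series_Rle _ _) with (2 := Hbe). intros; apply Rle_refl. }
  assert (HF : Fs s x = (Series al, Series be)).
  { unfold Fs, CSeries. f_equal; apply Series_ext; intros n.
    apply Re_mult_R. apply Im_mult_R. }
  pose proof (is_series_mult _ _ _ _ (Series_correct _ Hal') (Series_correct _ Hal') Hal Hal) as M1.
  pose proof (is_series_mult _ _ _ _ (Series_correct _ Hbe') (Series_correct _ Hbe') Hbe Hbe) as M2.
  assert (Hsq : Cmod (Fs s x) ^ 2
      = Series (fun n => x ^ n * Re (gbinom (s + Cconj s) n))).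
  { rewrite Cmod2_alt, HF. simpl (Re _). simpl (Im _).
    replace (Series al ^ 2) with (Series al * Series al) by ring.
    replace (Series be ^ 2) with (Series be * Series be) by ring.
    rewrite <- (is_series_unique _ _ M1), <- (is_series_unique _ _ M2).
    rewrite <- Series_plus by (eexists; eauto).
    apply Series_ext. intros n.
    rewrite <- vandermonde, Re_csum, <- plus_sum, scal_sum.
    apply sum_eq. intros k Hk.
    rewrite gbinom_conj, Re_mult_conj. unfold al, be.
    replace (x ^ n) with (x ^ k * x ^ (n - k)) by (rewrite <- pow_add; f_equal; lia).
    ring. }
  rewrite <- (sqrt_pow2 (Cmod (Fs s x))) by apply Cmod_ge_0.
  apply sqrt_le_1_alt. rewrite Hsq.
  apply Series_le_gen.
  - intros n. rewrite Rabs_mult, (Rabs_pos_eq (x ^ n)) by (apply pow_le; lra).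
    rewrite Rmult_comm. apply Rmult_le_compat.
    apply Rabs_pos. apply pow_le; lra.
    eapply Rle_trans. apply re_le_Cmod. apply Cmod_gbinom.
    apply pow_incr; lra.
  - apply Bn_ex. apply Cmod_ge_0. lra.
Qed.


Lemma cont_bound (q delta : R) (s t : C) (M : nat) :
  0 < q < 1 -> 0 < delta -> Re t <= 0 ->
  (forall r : nat, delta <= Cmod (1 - qpow q (t + RtoC (INR r)))%C) ->
  q ^ (S M) * (Cmod s + 1) <= 1/2 ->
  Cmod (CSeries (fun r => gbinom s r * qpow q (t + RtoC (INR r))
                       / (1 - qpow q (t + RtoC (INR r))))%C)
  <= INR M * (Cmod (qpow q t)) ^ M
        * sqrt (Series (fun n => Bn (Cmod (s + Cconj s)) n * q ^ n))
     + 4 * (Cmod (qpow q t)) ^ (S M) / delta.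
Proof.
  intros Hq Hd Ht Hy HM.
  set (Q := qpow q t). set (rho := Cmod Q).
  set (K := sqrt (Series (fun n => Bn (Cmod (s + Cconj s)) n * q ^ n))).
  set (a := Cmod s).
  set (y := fun r : nat => qpow q (t + RtoC (INR r))).
  assert (Hy' : forall r, y r = (Q * RtoC (q ^ r))%C) by (intros; apply qpow_shift; lra).
  assert (Hrho : 1 <= rho).
  { unfold rho, Q. rewrite Cmod_qpow. rewrite <- exp_0. 
    destruct (Rle_lt_or_eq_dec _ _ Ht) as [Hlt|Heq].
    - left. apply exp_increasing. 
      assert (ln q < 0). { rewrite <- ln_1. apply ln_increasing; lra. } nra.
    - rewrite Heq, Rmult_0_r. lra. }
  assert (Ha : 0 <= a) by apply Cmod_ge_0.
  assert (HK : 0 <= K) by apply sqrt_pos.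
  assert (Hnz : forall r, (1 - y r)%C <> 0%C).
  { intros r E. specialize (Hy r). fold (y r) in Hy. rewrite E, Cmod_0 in Hy. lra. }
  assert (Hcy : forall r k, Cmod (Cpow (y r) k) = rho ^ k * (q ^ k) ^ r).
  { intros r k. rewrite Cmod_pow, Hy', Cmod_mult, Cmod_R, Rabs_pos_eq by (apply pow_le; lra).
    rewrite Rpow_mult_distr. f_equal. rewrite <- !pow_mult. f_equal. lia. }
  set (T := fun k r => (gbinom s r * Cpow (y r) k / (1 - y r))%C).
  set (U := fun k r => (gbinom s r * Cpow (y r) k)%C).
  assert (Hqk : forall k, (1 <= k)%nat -> 0 <= q ^ k <= q).
  { intros k Hk. split. apply pow_le; lra. destruct k. lia. simpl.
    pose proof (pow_le q k ltac:(lra)). assert (q ^ k <= 1) by (rewrite <- (pow1 k); apply pow_incr; lra). nra. }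
  assert (HTb : forall k r, Cmod (T k r) <= rho ^ k / delta * (Bn a r * (q ^ k) ^ r)).
  { intros k r. unfold T. rewrite Cmod_div by auto. rewrite Cmod_mult, Hcy.
    unfold Rdiv. 
    assert (0 < / Cmod (1 - y r)) by (apply Rinv_0_lt_compat; specialize (Hy r); fold (y r) in Hy; lra).
    assert (/ Cmod (1 - y r) <= / delta) by (apply Rinv_le_contravar; auto; apply Hy).
    pose proof (Cmod_gbinom s r). pose proof (Cmod_ge_0 (gbinom s r)).
    assert (0 <= rho ^ k) by (apply pow_le; lra).
    assert (0 <= (q ^ k) ^ r) by (apply pow_le; apply pow_le; lra).
    fold a in H1.
    apply Rle_trans with (Bn a r * (rho ^ k * (q ^ k) ^ r) * / Cmod (1 - y r)).
    apply Rmult_le_compat_r. lra. apply Rmult_le_compat_r. nra. auto.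
    replace (rho ^ k * / delta * (Bn a r * (q ^ k) ^ r)) with (Bn a r * (rho ^ k * (q ^ k) ^ r) * / delta) by ring.
    apply Rmult_le_compat_l. apply Rmult_le_pos. apply Bn_nonneg; auto. nra. auto. }
  assert (HTex : forall k, (1 <= k)%nat -> Cex (T k)).
  { intros k Hk. apply (Cex_le _ _ (HTb k)).
    apply (ex_series_scal_l (rho ^ k / delta) (fun r => Bn a r * (q ^ k) ^ r)).
    apply Bn_ex; auto. specialize (Hqk k Hk). lra. }
  assert (HUe : forall k r, U k r = (Cpow Q k * (gbinom s r * RtoC ((q ^ k) ^ r)))%C).
  { intros k r. unfold U. rewrite Hy', Cpow_mult, Cpow_RtoC.
    rewrite <- !pow_mult. rewrite (Nat.mul_comm r k). ring. }
  assert (HUex0 : forall k, (1 <= k)%nat -> Cex (fun r => gbinom s r * RtoC ((q ^ k) ^ r))%C).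
  { intros k Hk. apply (Cex_le _ (fun r => Bn a r * (q ^ k) ^ r)).
    - intros r. rewrite Cmod_mult, Cmod_R, Rabs_pos_eq by (apply pow_le; apply pow_le; lra).
      apply Rmult_le_compat_r. apply pow_le; apply pow_le; lra. apply Cmod_gbinom.
    - apply Bn_ex; auto. specialize (Hqk k Hk). lra. }
  assert (HUex : forall k, (1 <= k)%nat -> Cex (U k)).
  { intros k Hk. unfold Cex. 
    apply (ex_series_ext (fun r => Cmod (Cpow Q k) * Cmod (gbinom s r * RtoC ((q ^ k) ^ r))%C)).
    intros r. rewrite HUe. symmetry. apply Cmod_mult.
    apply (ex_series_scal_l (Cmod (Cpow Q k)) (fun r => Cmod (gbinom s r * RtoC ((q ^ k) ^ r))%C)).
    apply HUex0; auto. }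
  assert (HUb : forall k, (1 <= k)%nat -> Cmod (CSeries (U k)) <= rho ^ k * K).
  { intros k Hk. rewrite (CSeries_ext _ _ (HUe k)). rewrite CSeries_scal by (apply HUex0; auto).
    rewrite Cmod_mult, Cmod_pow. fold rho. apply Rmult_le_compat_l. apply pow_le; lra.
    unfold K. apply (F_bound s q (q ^ k)); auto. }
  assert (Hsplit : forall k, (1 <= k)%nat ->
            CSeries (T k) = (CSeries (U k) + CSeries (T (S k)))%C).
  { intros k Hk. rewrite <- CSeries_plus by (auto; apply HTex; lia).
    apply CSeries_ext. intros r. unfold T, U. simpl (Cpow _ (S k)).
    field. auto. }
  assert (Hind : forall M, Cmod (CSeries (T 1%nat)) <= INR M * rho ^ M * K + Cmod (CSeries (T (S M)))).
  { induction M0.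
    - simpl. lra.
    - rewrite (Hsplit (S M0)) in IHM0 by lia.
      eapply Rle_trans. apply IHM0.
      eapply Rle_trans. apply Rplus_le_compat_l. apply Cmod_triangle.
      pose proof (HUb (S M0) ltac:(lia)).
      rewrite S_INR. simpl (rho ^ S M0).
      assert (rho ^ M0 <= rho * rho ^ M0).
      { pose proof (pow_le rho M0 ltac:(lra)). nra. }
      pose proof (pos_INR M0).
      assert (0 <= rho ^ M0) by (apply pow_le; lra).
      simpl in H.
      assert (INR M0 * rho ^ M0 * K <= INR M0 * (rho * rho ^ M0) * K).
      { apply Rmult_le_compat_r; auto. apply Rmult_le_compat_l; auto. }
      lra. }
  assert (Htail : Cmod (CSeries (T (S M))) <= 4 * rho ^ S M / delta).
  { eapply Rle_trans. apply (Cmod_CSeries_bound _ (fun r => rho ^ S M / delta * (1/2) ^ r)).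
    - intros r. eapply Rle_trans. apply HTb. apply Rmult_le_compat_l.
      unfold Rdiv; apply Rmult_le_pos. apply pow_le; lra. left; apply Rinv_0_lt_compat; lra.
      apply Bn_geom; auto. apply pow_le; lra.
    - apply ex_series_geom_scal. lra.
    - rewrite Series_geom_scal by lra. right. field. lra. }
  assert (E : CSeries (fun r => gbinom s r * qpow q (t + RtoC (INR r)) / (1 - qpow q (t + RtoC (INR r))))%C
              = CSeries (T 1%nat)).
  { apply CSeries_ext. intros r. unfold T. simpl (Cpow _ 1). fold (y r). f_equal. ring. }
  rewrite E. eapply Rle_trans. apply (Hind M). fold rho. fold K. lra.
Qed.


Lemma exp_le_mono x y : x <= y -> exp x <= exp y.
Proof. intros H. destruct (Rle_lt_or_eq_dec _ _ H). left; apply exp_increasing; auto. subst; lra. Qed.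

Lemma ln_le_mono x y : 0 < x -> x <= y -> ln x <= ln y.
Proof. intros H0 H. destruct (Rle_lt_or_eq_dec _ _ H). left; apply ln_increasing; auto. subst; lra. Qed.

Lemma ln_le_self x : 0 < x -> ln x <= x.
Proof.
  intros Hx. rewrite <- (ln_exp x) at 2. apply ln_le_mono; auto.
  destruct (Req_dec x 0). lra. pose proof (exp_ineq1 x H). lra.
Qed.

Lemma exp_ge_1plus x : 1 + x <= exp x.
Proof. destruct (Req_dec x 0). subst. rewrite exp_0. lra. left. apply exp_ineq1; auto. Qed.

Lemma exp_pow_INR a n : exp a ^ n = exp (INR n * a).
Proof.
  rewrite <- Rpower_pow by apply exp_pos. unfold Rpower. rewrite ln_exp. reflexivity.
Qed.

Lemma exists_min (P : nat -> Prop) n :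
  P n -> exists m, P m /\ forall k, (k < m)%nat -> ~ P k.
Proof.
  revert P. induction n as [n IH] using (well_founded_induction Wf_nat.lt_wf).
  intros P Hn.
  destruct (classic (exists k, (k < n)%nat /\ P k)) as [[k [Hk Pk]] | Hno].
  - exact (IH k Hk P Pk).
  - exists n. split; auto. intros k Hk Pk. apply Hno. eauto.
Qed.

Lemma dirichlet_bound q sigma v t :
  0 < q < 1 -> 0 < Re t ->
  Cmod (zeta_q_dirichlet q (sigma, v) t)
  <= 2 * (exp (Rabs sigma * - ln (1 - q)) * exp (ln q * Re t) / (1 - exp (ln q * Re t))).
Proof.
  intros Hq Ht.
  set (rho := exp (ln q * Re t)).
  set (E := exp (Rabs sigma * - ln (1 - q))).
  assert (Hlnq : ln q < 0) by (rewrite <- ln_1; apply ln_increasing; lra).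
  assert (Hrho : 0 < rho < 1).
  { split. apply exp_pos. unfold rho. rewrite <- exp_0. apply exp_increasing. nra. }
  assert (Hl1 : ln (1 - q) < 0) by (rewrite <- ln_1; apply ln_increasing; lra).
  unfold zeta_q_dirichlet.
  replace (2 * (E * rho / (1 - rho))) with (2 * Series (fun n => (E * rho) * rho ^ n)).
  2: { rewrite Series_geom_scal by lra. reflexivity. }
  apply Cmod_CSeries_bound. 2: apply ex_series_geom_scal; lra.
  intros n. rewrite Cmod_mult, Cmod_qpow. unfold rpow_neg. rewrite Cmod_cexp.
  replace (Re (RtoC (INR (S n)) * t)) with (INR (S n) * Re t) by (rewrite Re_RtoC_mult; auto).
  replace (E * rho * rho ^ n) with (rho ^ (S n) * E) by (simpl; ring).
  unfold rho. rewrite exp_pow_INR.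
  replace (ln q * (INR (S n) * Re t)) with (INR (S n) * (ln q * Re t)) by ring.
  apply Rmult_le_compat_l. left; apply exp_pos.
  unfold E. apply exp_le_mono.
  set (x := qint q (S n)).
  assert (Hx1 : 1 <= x).
  { unfold x, qint. simpl. apply (Rmult_le_reg_r (1 - q)). lra.
    unfold Rdiv. rewrite Rmult_assoc, Rinv_l by lra.
    pose proof (pow_le q n ltac:(lra)). assert (q ^ n <= 1) by (rewrite <- (pow1 n); apply pow_incr; lra). nra. }
  assert (Hx2 : x <= / (1 - q)).
  { unfold x, qint. unfold Rdiv. rewrite <- (Rmult_1_l (/ (1 - q))) at 2.
    apply Rmult_le_compat_r. left; apply Rinv_0_lt_compat; lra.
    pose proof (pow_le q (S n) ltac:(lra)). lra. }
  assert (L1 : 0 <= ln x) by (rewrite <- ln_1; apply ln_le_mono; lra).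
  assert (L2 : ln x <= - ln (1 - q)) by (rewrite <- ln_Rinv by lra; apply ln_le_mono; lra).
  simpl (Re _).
  replace (- (ln x * sigma - 0 * v)) with (- (ln x * sigma)) by ring.
  destruct (Rle_dec 0 sigma).
  - rewrite Rabs_pos_eq by auto. nra.
  - rewrite Rabs_left by lra. nra.
Qed.


Lemma cont_final q eps sigma v t delta :
  0 < q < 1 -> 0 < eps < delta -> Re t <= 0 ->
  (forall r : nat, delta <= Cmod (1 - qpow q (t + RtoC (INR r)))%C) ->
  Cmod (zeta_q_cont q (sigma, v) t)
  <= exp (sigma * ln (1 - q))
     * (sqrt (Series (fun n => Bn (Cmod (RtoC (2 * sigma))) n * q ^ n)) + 4 / eps)
     * (ln (2 * (Cmod (sigma, v) + 1)) / (- ln q) + 1)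
     * exp (- Re t * (ln (2 * (Cmod (sigma, v) + 1)) + - ln q)).
Proof.
  intros Hq He Ht Hy.
  set (s := (sigma, v)).
  set (a := Cmod s).
  set (Ks := sqrt (Series (fun n => Bn (Cmod (RtoC (2 * sigma))) n * q ^ n))).
  set (L := ln (2 * (a + 1))).
  set (lam := - ln q).
  assert (Ha : 0 <= a) by apply Cmod_ge_0.
  assert (Hlam : 0 < lam) by (unfold lam; assert (ln q < ln 1) by (apply ln_increasing; lra); rewrite ln_1 in *; lra).
  assert (HKs : 0 <= Ks) by apply sqrt_pos.
  assert (Hconj : (s + Cconj s)%C = RtoC (2 * sigma)).
  { unfold s, Cconj, Cplus, RtoC; simpl. apply injective_projections; simpl; ring. }
  set (P := fun n => q ^ n * (2 * (a + 1)) <= 1).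
  destruct (pow_lt_1_zero q ltac:(rewrite Rabs_pos_eq; lra) (/ (2 * (a + 1)))
              ltac:(apply Rinv_0_lt_compat; lra)) as [N HN].
  assert (PN : P N).
  { unfold P. specialize (HN N (le_n N)). rewrite Rabs_pos_eq in HN by (apply pow_le; lra).
    apply (Rmult_lt_compat_r (2 * (a + 1))) in HN. rewrite Rinv_l in HN by lra. lra. lra. }
  destruct (exists_min P N PN) as [m [Pm Hmin]].
  destruct m as [|M].
  { unfold P in Pm. simpl in Pm. lra. }
  assert (nPM : ~ P M) by (apply Hmin; lia).
  unfold P in Pm, nPM.
  assert (HM : q ^ S M * (Cmod s + 1) <= 1/2) by (fold a; lra).
  pose proof (cont_bound q delta s t M Hq ltac:(lra) Ht Hy HM) as CB.
  rewrite Hconj in CB. fold Ks in CB.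
  set (rho := Cmod (qpow q t)) in CB.
  assert (Hrho : 1 <= rho).
  { unfold rho. rewrite Cmod_qpow. rewrite <- exp_0. apply exp_le_mono.
    assert (ln q < 0) by (unfold lam in Hlam; lra). nra. }
  assert (Hrp : forall k, rho ^ k = exp (INR k * (ln q * Re t))).
  { intros k. unfold rho. rewrite Cmod_qpow. apply exp_pow_INR. }
  assert (HML : INR M <= L / lam).
  { apply Rnot_le_lt in nPM.
    assert (H0 : 0 < ln (q ^ M * (2 * (a + 1)))).
    { rewrite <- ln_1. apply ln_increasing; lra. }
    rewrite ln_mult in H0 by (try apply pow_lt; lra). rewrite ln_pow in H0 by lra.
    fold L in H0. apply (Rmult_le_reg_r lam). auto. unfold Rdiv. rewrite Rmult_assoc, Rinv_l by lra.
    unfold lam. lra. }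
  assert (Hexp : rho ^ S M <= exp (- Re t * (L + lam))).
  { rewrite Hrp. apply exp_le_mono. rewrite S_INR.
    replace ((INR M + 1) * (ln q * Re t)) with ((- Re t) * (INR M * lam + lam)) by (unfold lam; ring).
    apply Rmult_le_compat_l. lra.
    apply Rplus_le_compat_r. apply (Rmult_le_reg_r (/ lam)). apply Rinv_0_lt_compat; auto.
    rewrite Rmult_assoc, Rinv_r by lra. rewrite Rmult_1_r. exact HML. }
  assert (HrhoM : rho ^ M <= rho ^ S M).
  { simpl. pose proof (pow_le rho M ltac:(lra)). nra. }
  assert (H4 : 4 / delta <= 4 / eps).
  { unfold Rdiv. apply Rmult_le_compat_l. lra. apply Rinv_le_contravar; lra. }
  assert (Hser : Cmod (CSeries (fun r => gbinom s r * qpow q (t + RtoC (INR r))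
                       / (1 - qpow q (t + RtoC (INR r))))%C)
                 <= (INR M + 1) * (Ks + 4 / eps) * rho ^ S M).
  { eapply Rle_trans. apply CB.
    pose proof (pos_INR M).
    assert (0 <= rho ^ M) by (apply pow_le; lra).
    assert (INR M * rho ^ M * Ks <= INR M * rho ^ S M * Ks).
    { apply Rmult_le_compat_r; auto. apply Rmult_le_compat_l; auto. }
    assert (4 * rho ^ S M / delta <= 4 / eps * rho ^ S M).
    { replace (4 * rho ^ S M / delta) with (4 / delta * rho ^ S M) by (unfold Rdiv; ring).
      apply Rmult_le_compat_r. apply pow_le; lra. auto. }
    assert (0 <= rho ^ S M) by (apply pow_le; lra).
    assert (INR M * (4 / eps) * rho ^ S M >= 0).
    { apply Rle_ge. apply Rmult_le_pos. apply Rmult_le_pos. auto.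
      unfold Rdiv. apply Rmult_le_pos. lra. left; apply Rinv_0_lt_compat; lra. auto. }
    assert (Ks * rho ^ S M >= 0) by (apply Rle_ge; apply Rmult_le_pos; auto).
    assert (E : (INR M + 1) * (Ks + 4 / eps) * rho ^ S M
               = INR M * rho ^ S M * Ks + 4 / eps * rho ^ S M
                 + (INR M * (4 / eps) * rho ^ S M + Ks * rho ^ S M)) by ring.
    rewrite E. lra. }
  unfold zeta_q_cont. rewrite Cmod_mult, Cmod_cexp. fold s.
  replace (Re (s * RtoC (ln (1 - q)))) with (sigma * ln (1 - q)) by (rewrite Re_mult_R; reflexivity).
  fold a. fold L. fold lam. fold Ks.
  rewrite !Rmult_assoc. apply Rmult_le_compat_l. left; apply exp_pos.
  eapply Rle_trans. apply Hser.
  assert (0 <= Ks + 4 / eps).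
  { unfold Rdiv. assert (0 < / eps) by (apply Rinv_0_lt_compat; lra). lra. }
  assert (0 <= rho ^ S M) by (apply pow_le; lra).
  pose proof (pos_INR M).
  replace ((INR M + 1) * (Ks + 4 / eps) * rho ^ S M)
    with ((Ks + 4 / eps) * ((INR M + 1) * rho ^ S M)) by ring.
  apply Rmult_le_compat_l; auto.
  apply Rmult_le_compat; try lra.
Qed.


Theorem theorem1p1 (eps q sigma tau : R) :
  0 < eps -> 0 < q < 1 ->
  exists C0 V0 : R, 0 < C0 /\ 0 < V0 /\
    forall (v : R) (t : C),
      V0 <= Rabs v ->
      Re t = tau ->
      (exists delta : R, eps < delta /\
         forall r : nat, delta <= Cmod (1 - qpow q (t + RtoC (INR r)))%C) ->
      (0 < tau -> Cmod (zeta_q q (sigma, v) t) <= C0) /\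
      (tau = 0 -> Cmod (zeta_q q (sigma, v) t) <= C0 * Rabs v) /\
      (tau < 0 -> Cmod (zeta_q q (sigma, v) t)
                    <= C0 * exp (- tau * (1 + PI / 2) * Rabs v)).
Proof.
  intros Heps Hq.
  set (lam := - ln q).
  assert (Hlam : 0 < lam) by (unfold lam; assert (ln q < ln 1) by (apply ln_increasing; lra); rewrite ln_1 in *; lra).
  set (A0 := exp (sigma * ln (1 - q))).
  set (Kc := sqrt (Series (fun n => Bn (Cmod (RtoC (2 * sigma))) n * q ^ n)) + 4 / eps).
  assert (HA0 : 0 < A0) by apply exp_pos.
  assert (HKc : 0 < Kc).
  { unfold Kc. pose proof (sqrt_pos (Series (fun n => Bn (Cmod (RtoC (2 * sigma))) n * q ^ n))).
    assert (0 < 4 / eps) by (unfold Rdiv; apply Rmult_lt_0_compat; [lra | apply Rinv_0_lt_compat; lra]).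
    lra. }
  assert (Hcmod : forall v, Cmod (sigma, v) <= Rabs sigma + Rabs v).
  { intros v. apply Cmod_le_sum. }
  assert (Hzc : forall v t, Re t <= 0 -> zeta_q q (sigma, v) t = zeta_q_cont q (sigma, v) t).
  { intros v t Ht. unfold zeta_q. destruct (Rlt_dec 0 (Re t)); [lra | reflexivity]. }
  destruct (Rtotal_order tau 0) as [Hneg | [Hzero | Hpos]].
  -
    set (T := - tau).
    assert (HT : 0 < T) by (unfold T; lra).
    set (A' := 2 * Rabs sigma + 6).
    assert (HA' : 1 <= A') by (unfold A'; pose proof (Rabs_pos sigma); lra).
    assert (HlnA : 0 <= ln A') by (rewrite <- ln_1; apply ln_le_mono; lra).
    set (c1 := ln A' / lam + 1).
    set (c2 := / (2 * lam)).
    assert (Hc1 : 0 <= c1).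
    { unfold c1. assert (0 <= ln A' / lam) by (unfold Rdiv; apply Rmult_le_pos; auto; left; apply Rinv_0_lt_compat; lra). lra. }
    assert (Hc2 : 0 < c2) by (unfold c2; apply Rinv_0_lt_compat; lra).
    exists (A0 * Kc * (c1 + 2 * c2 / T) * exp (T * (ln A' + lam))), 1.
    split.
    { apply Rmult_lt_0_compat. apply Rmult_lt_0_compat. apply Rmult_lt_0_compat; auto.
      assert (0 < 2 * c2 / T) by (unfold Rdiv; apply Rmult_lt_0_compat; [lra | apply Rinv_0_lt_compat; lra]).
      lra. apply exp_pos. }
    split; [lra|].
    intros v t Hv Ht [delta [Hd Hy]].
    split; [intros; lra|]. split; [intros; lra|]. intros _.
    rewrite Hzc by lra.
    eapply Rle_trans. apply (cont_final q eps sigma v t delta); auto; lra.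
    fold A0 Kc lam. rewrite Ht. fold T.
    set (L := ln (2 * (Cmod (sigma, v) + 1))).
    pose proof (Hcmod v). pose proof (Rabs_pos v). pose proof (Cmod_ge_0 (sigma, v)).
    assert (HL : L <= ln A' + Rabs v / 2).
    { unfold L. rewrite <- (ln_exp (Rabs v / 2)) at 1. rewrite <- ln_mult by (try apply exp_pos; lra).
      apply ln_le_mono. lra. pose proof (exp_ge_1plus (Rabs v / 2)).
      pose proof (Rabs_pos sigma). unfold A'.
      nra. }
    assert (Hfac : L / lam + 1 <= (c1 + 2 * c2 / T) * exp (T * (Rabs v / 2))).
    { pose proof (exp_ge_1plus (T * (Rabs v / 2))).
      assert (HA1 : L / lam + 1 <= c1 + c2 * Rabs v).
      { unfold c1, c2. unfold Rdiv. 
        apply Rle_trans with ((ln A' + Rabs v / 2) * / lam + 1).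
        apply Rplus_le_compat_r. apply Rmult_le_compat_r; auto. left; apply Rinv_0_lt_compat; lra.
        right. field. lra. }
      assert (HA2 : c1 + c2 * Rabs v <= (c1 + 2 * c2 / T) * (1 + T * (Rabs v / 2))).
      { replace ((c1 + 2 * c2 / T) * (1 + T * (Rabs v / 2)))
          with (c1 + c1 * T * (Rabs v / 2) + 2 * c2 / T + c2 * Rabs v) by (field; lra).
        assert (0 <= c1 * T * (Rabs v / 2)) by (apply Rmult_le_pos; [apply Rmult_le_pos|]; lra).
        assert (0 <= 2 * c2 / T) by (unfold Rdiv; apply Rmult_le_pos; [lra | left; apply Rinv_0_lt_compat; lra]).
        lra. }
      assert (0 <= c1 + 2 * c2 / T).
      { assert (0 <= 2 * c2 / T) by (unfold Rdiv; apply Rmult_le_pos; [lra | left; apply Rinv_0_lt_compat; lra]). lra. }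
      eapply Rle_trans. apply HA1. eapply Rle_trans. apply HA2.
      apply Rmult_le_compat_l; auto. }
    assert (Hex : exp (T * (L + lam)) <= exp (T * (ln A' + lam)) * exp (T * (Rabs v / 2))).
    { rewrite <- exp_plus. apply exp_le_mono.
      assert (T * L <= T * (ln A' + Rabs v / 2)) by (apply Rmult_le_compat_l; lra). lra. }
    assert (Hfin : exp (T * (Rabs v / 2)) * exp (T * (Rabs v / 2)) <= exp (T * (1 + PI / 2) * Rabs v)).
    { rewrite <- exp_plus. apply exp_le_mono. pose proof PI_RGT_0.
      assert (0 <= T * PI * Rabs v) by (apply Rmult_le_pos; [apply Rmult_le_pos|]; lra). lra. }
    assert (0 <= L / lam + 1).
    { assert (HL0 : 0 <= L). { unfold L. rewrite <- ln_1. apply ln_le_mono; lra. }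
      assert (0 <= L / lam) by (unfold Rdiv; apply Rmult_le_pos; auto; left; apply Rinv_0_lt_compat; lra). lra. }
    assert (0 <= exp (T * (L + lam))) by (left; apply exp_pos).
    apply Rle_trans with (A0 * Kc * ((c1 + 2 * c2 / T) * exp (T * (Rabs v / 2)))
                           * (exp (T * (ln A' + lam)) * exp (T * (Rabs v / 2)))).
    { apply Rmult_le_compat; auto.
      apply Rmult_le_pos. apply Rmult_le_pos; lra. auto.
      apply Rmult_le_compat_l; auto. apply Rmult_le_pos; lra. }
    replace (A0 * Kc * ((c1 + 2 * c2 / T) * exp (T * (Rabs v / 2)))
                           * (exp (T * (ln A' + lam)) * exp (T * (Rabs v / 2))))
      with ((A0 * Kc * (c1 + 2 * c2 / T) * exp (T * (ln A' + lam)))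
             * (exp (T * (Rabs v / 2)) * exp (T * (Rabs v / 2)))) by ring.
    apply Rmult_le_compat_l; auto.
    left. apply Rmult_lt_0_compat. apply Rmult_lt_0_compat. apply Rmult_lt_0_compat; auto.
    assert (0 < 2 * c2 / T) by (unfold Rdiv; apply Rmult_lt_0_compat; [lra | apply Rinv_0_lt_compat; lra]).
    lra. apply exp_pos.
  -
    set (c := (2 * Rabs sigma + 4) / lam + 1).
    assert (Hc : 0 < c).
    { unfold c. pose proof (Rabs_pos sigma).
      assert (0 < (2 * Rabs sigma + 4) / lam) by (unfold Rdiv; apply Rmult_lt_0_compat; [lra | apply Rinv_0_lt_compat; lra]).
      lra. }
    exists (A0 * Kc * c), 1.
    split. apply Rmult_lt_0_compat; auto. apply Rmult_lt_0_compat; auto.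
    split; [lra|].
    intros v t Hv Ht [delta [Hd Hy]].
    split; [intros; lra|]. split; [|intros; lra]. intros _.
    rewrite Hzc by lra.
    eapply Rle_trans. apply (cont_final q eps sigma v t delta); auto; lra.
    fold A0 Kc lam. rewrite Ht, Hzero.
    replace (- 0 * (ln (2 * (Cmod (sigma, v) + 1)) + lam)) with 0 by ring. rewrite exp_0, Rmult_1_r.
    apply Rle_trans with (A0 * Kc * (c * Rabs v)); [| right; ring].
    apply Rmult_le_compat_l. apply Rmult_le_pos; lra.
    set (L := ln (2 * (Cmod (sigma, v) + 1))).
    pose proof (Hcmod v). pose proof (Rabs_pos sigma). pose proof (Cmod_ge_0 (sigma, v)).
    assert (HL : L <= (2 * Rabs sigma + 4) * Rabs v).
    { eapply Rle_trans. apply ln_le_self. lra. nra. }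
    unfold c. rewrite Rmult_plus_distr_r, Rmult_1_l.
    apply Rplus_le_compat; [|lra].
    unfold Rdiv. rewrite Rmult_assoc, (Rmult_comm (/ lam)), <- Rmult_assoc.
    apply Rmult_le_compat_r. left; apply Rinv_0_lt_compat; lra. auto.
  -
    set (rho := exp (ln q * tau)).
    set (E := exp (Rabs sigma * - ln (1 - q))).
    assert (Hrho : 0 < rho < 1).
    { split. apply exp_pos. unfold rho. rewrite <- exp_0. apply exp_increasing. unfold lam in Hlam. nra. }
    assert (HB : 0 <= 2 * (E * rho / (1 - rho))).
    { assert (0 < E) by apply exp_pos.
      assert (0 < / (1 - rho)) by (apply Rinv_0_lt_compat; lra).
      unfold Rdiv. assert (0 <= E * rho * / (1 - rho)) by (apply Rmult_le_pos; [apply Rmult_le_pos|]; lra). lra. }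
    exists (2 * (E * rho / (1 - rho)) + 1), 1.
    split; [lra|]. split; [lra|].
    intros v t Hv Ht [delta [Hd Hy]].
    split; [|split; intros; lra]. intros _.
    unfold zeta_q. destruct (Rlt_dec 0 (Re t)) as [Hp|Hn]; [|lra].
    eapply Rle_trans. apply dirichlet_bound; auto. rewrite Ht. fold rho E. lra.
Qed.
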